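(* For odd $m$, $s_1^{(m)\dagger}\Omega_m s_2^{(m)}=1$, where $\Omega_m=\begin{pmatrix}0&\mathbb{1}\\\mathbb{1}&0\end{pmatrix}$ is the $2m\times 2m$ symplectic form and $\mathbb{1}$ is the $m\times m$ identity matrix.
   Context: The Chamon model (one qubit per cubic lattice site) in the Laurent polynomial formalism over $\mathbb{F}_2[x^{\pm1},y^{\pm1},z^{\pm1}]$ has stabilizer map $\sigma=\begin{pmatrix}(1+x^{-1})(y^{-1}+z^{-1})\\(1+y^{-1})(x^{-1}+z^{-1})\end{pmatrix}$ and excitation map $\epsilon=\sigma^\dagger\Omega_1=\begin{pmatrix}(1+y)(x+z)&(1+x)(y+z)\end{pmatrix}$, where $^\dagger$ is transposition with spatial inversion. Define the fracton creation operators $s_1=x^{m-1}(1+y+\dots+y^{m-1})(1+z/x+\dots+(z/x)^{m-1})(1,0)^T$ and $s_2=y^{m-1}(1+x+\dots+x^{m-1})(1+z/y+\dots+(z/y)^{m-1})(0,1)^T$, which satisfy $\epsilon s_1=(1+y^m)(x^m+z^m)$ and $\epsilon s_2=(1+x^m)(y^m+z^m)$. $s_i^{(m)}$ denotes the representation of $s_i$ after coarse-graining the lattice by a factor $m$ in each direction (translation variables $x'=x^m$, $y'=y^m$, $z'=z^m$). *)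

(* Defs.v *)
(* Laurent polynomials over F_2 in x,y,z are modelled
   concretely as finite lists of exponent triples (monomials); the
   coefficient of a monomial is the parity of its multiplicity. *)
From mathcomp Require Import all_boot all_algebra.
Set Implicit Arguments. Unset Strict Implicit. Unset Printing Implicit Defensive.
Import GRing.Theory Num.Theory.
Local Open Scope ring_scope.

Definition mono := (int * int * int)%type.
Definition mk (a b c : int) : mono := (a, b, c).
Definition madd (e f : mono) : mono := mk (e.1.1 + f.1.1) (e.1.2 + f.1.2) (e.2 + f.2).
Definition mneg (e : mono) : mono := mk (- e.1.1) (- e.1.2) (- e.2).
Definition mscale (k : nat) (e : mono) : mono :=
  mk (k%:Z * e.1.1) (k%:Z * e.1.2) (k%:Z * e.2).

Definition lpoly := seq mono.
Definition lcoef (p : lpoly) (e : mono) : bool := odd (count_mem e p).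
Definition lpeq (p q : lpoly) : Prop := forall e, lcoef p e = lcoef q e.
Definition lzero : lpoly := [::].
Definition lone : lpoly := [:: mk 0 0 0].
Definition lmono (a b c : int) : lpoly := [:: mk a b c].
Definition ladd (p q : lpoly) : lpoly := p ++ q.
Definition lmul (p q : lpoly) : lpoly := [seq madd e f | e <- p, f <- q].
Definition lbar (p : lpoly) : lpoly := map mneg p.
Definition geom (n : nat) (t : mono) : lpoly := [seq mscale k t | k <- iota 0 n].

(* Pauli operators with one qubit per site: (X part, Z part) *)
Definition pauli1 := (lpoly * lpoly)%type.

Definition s1 (m : nat) : pauli1 :=
  (lmul (lmono (m.-1)%:Z 0 0) (lmul (geom m (mk 0 1 0)) (geom m (mk (-1) 0 1))),
   lzero).
Definition s2 (m : nat) : pauli1 :=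
  (lzero,
   lmul (lmono 0 (m.-1)%:Z 0) (lmul (geom m (mk 1 0 0)) (geom m (mk 0 (-1) 1)))).

(* Coarse-graining by factor m: fine site (m i + u1, m j + u2, m k + u3),
   0 <= u_l < m, becomes qubit u = (u1,u2,u3) of coarse site (i,j,k);
   x' = x^m, y' = y^m, z' = z^m. *)
Definition block := (nat * nat * nat)%type.
Definition blocks (m : nat) : seq block :=
  flatten [seq [seq (a, b, c) | b <- iota 0 m, c <- iota 0 m] | a <- iota 0 m].
Definition in_block (m : nat) (u : block) (e : mono) : bool :=
  [&& modz e.1.1 m%:Z == u.1.1%:Z, modz e.1.2 m%:Z == u.1.2%:Z
    & modz e.2 m%:Z == u.2%:Z].
Definition coarse_mono (m : nat) (e : mono) : mono :=
  mk (divz e.1.1 m%:Z) (divz e.1.2 m%:Z) (divz e.2 m%:Z).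
Definition cg_comp (m : nat) (p : lpoly) (u : block) : lpoly :=
  [seq coarse_mono m e | e <- p & in_block m u e].

(* coarse-grained Pauli s^(m): a vector of length 2 m^3 over
   F_2[x'^{+-1},...], indexed by (X/Z, u); first m^3 X components, then Z *)
Definition cpauli := ((block -> lpoly) * (block -> lpoly))%type.
Definition coarse (m : nat) (s : pauli1) : cpauli :=
  (cg_comp m s.1, cg_comp m s.2).

(* s^dagger Omega t, with Omega = [[0, 1],[1, 0]] the 2n x 2n symplectic
   form, n = m^3 qubits per coarse site *)
Definition symp (m : nat) (s t : cpauli) : lpoly :=
  flatten [seq ladd (lmul (lbar (s.1 u)) (t.2 u)) (lmul (lbar (s.2 u)) (t.1 u))
          | u <- blocks m].

(* Main.v *)
Require Import Defs.
From mathcomp Require Import all_boot all_algebra.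
From mathcomp Require Import zify.
Set Implicit Arguments. Unset Strict Implicit. Unset Printing Implicit Defensive.
Import GRing.Theory Num.Theory.

Definition tom (t : nat * nat * nat) : mono := mk t.1.1%:Z t.1.2%:Z t.2%:Z.
Definition z0 : mono := mk 0 0 0.

Definition L1 m := [seq ((m.-1 - k)%N, b, k) | b <- iota 0 m, k <- iota 0 m].
Definition L2 m := [seq (a, (m.-1 - k)%N, k) | a <- iota 0 m, k <- iota 0 m].

Lemma s1E m : (s1 m).1 = map tom (L1 m).
Proof.
rewrite /s1 /lmul /lmono /= cats0 map_allpairs /geom allpairs_mapl allpairs_mapr.
rewrite /L1 map_allpairs; apply/eq_in_allpairs => b k _.
rewrite mem_iota add0n => hk.
rewrite /madd /mscale /mk /tom /=; congr (_, _, _); lia.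
Qed.

Lemma s2E m : (s2 m).2 = map tom (L2 m).
Proof.
rewrite /s2 /lmul /lmono /= cats0 map_allpairs /geom allpairs_mapl allpairs_mapr.
rewrite /L2 map_allpairs; apply/eq_in_allpairs => b k _.
rewrite mem_iota add0n => hk.
rewrite /madd /mscale /mk /tom /=; congr (_, _, _); lia.
Qed.

Lemma cg_cons m e p u : cg_comp m (e :: p) u =
  if in_block m u e then coarse_mono m e :: cg_comp m p u else cg_comp m p u.
Proof. by rewrite /cg_comp /=; case: ifP. Qed.

Lemma cgE m (L : seq (nat * nat * nat)) u : 0 < m ->
  all (fun t => [&& t.1.1 < m, t.1.2 < m & t.2 < m]) L ->
  cg_comp m (map tom L) u = nseq (count_mem u L) z0.
Proof.
move=> m0; elim: L => //= t L IH /andP[/and3P[h1 h2 h3] hL].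
rewrite cg_cons IH //.
have -> : in_block m u (tom t) = (t == u).
  rewrite /in_block /tom /mk /= !modz_nat !modn_small // !eqz_nat.
  by case: t {h1 h2 h3 IH hL} => [[a b] c]; case: (u) => [[a1 b1] c1] /=; rewrite !xpair_eqE andbA.
case: (t == u) => //=; congr (_ :: _).
rewrite /coarse_mono /tom /mk /= (divz_nat t.1.1 m) (divz_nat t.1.2 m) (divz_nat t.2 m).
by rewrite !divn_small.
Qed.

Lemma lmul_nseq a b : lmul (lbar (nseq a z0)) (nseq b z0) = nseq (a * b) z0.
Proof.
elim: a => //= a IH; rewrite mulSn nseqD -IH /lmul /=; congr (_ ++ _).
rewrite /madd /mneg /z0 /mk /=.
by elim: b {IH} => //= b ->; rewrite oppr0 add0r.
Qed.

Lemma count_flat_nseq (T : eqType) (f : T -> nat) s e :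
  count_mem e (flatten [seq nseq (f u) z0 | u <- s]) = (z0 == e) * sumn [seq f u | u <- s].
Proof.
elim: s => //= [|u s IH]; first by rewrite muln0.
by rewrite count_cat IH count_nseq mulnDr.
Qed.

Lemma mem_L1 m a b c : ((a, b, c) \in L1 m) = [&& b < m, c < m & a == m.-1 - c].
Proof.
apply/allpairsP/and3P => [[[b' k] [/= hb hk [-> -> ->]]]|[hb hc /eqP ->]].
  by move: hb hk; rewrite !mem_iota !add0n => hb hk; split.
by exists (b, c); rewrite /= !mem_iota !add0n hb hc.
Qed.

Lemma mem_L2 m a b c : ((a, b, c) \in L2 m) = [&& a < m, c < m & b == m.-1 - c].
Proof.
apply/allpairsP/and3P => [[[b' k] [/= hb hk [-> -> ->]]]|[hb hc /eqP ->]].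
  by move: hb hk; rewrite !mem_iota !add0n => hb hk; split.
by exists (a, c); rewrite /= !mem_iota !add0n hb hc.
Qed.

Lemma blocksE m : blocks m =
  [seq (a, q.1, q.2) | a <- iota 0 m, q <- [seq (b, c) | b <- iota 0 m, c <- iota 0 m]].
Proof.
rewrite /blocks; congr flatten; apply: eq_map => a.
by rewrite map_allpairs.
Qed.

Lemma mem_blocks m a b c : ((a, b, c) \in blocks m) = [&& a < m, b < m & c < m].
Proof.
rewrite blocksE; apply/allpairsP/and3P => [[[a' [b' c']] [/= ha /allpairsP [[b'' c''] [/= hb hc [-> ->]]] [-> -> ->]]]|[ha hb hc]].
  by move: ha hb hc; rewrite !mem_iota !add0n => ha hb hc; split.
exists (a, (b, c)); split => //=; first by rewrite mem_iota.
by apply/allpairsP; exists (b, c); rewrite /= !mem_iota.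
Qed.

Lemma uniq_blocks m : uniq (blocks m).
Proof.
rewrite blocksE; apply: allpairs_uniq; first exact: iota_uniq.
  apply: allpairs_uniq; try exact: iota_uniq.
  by move=> [x1 y1] [x2 y2] _ _ /= [-> ->].
by move=> [x1 [y1 z1]] [x2 [y2 z2]] _ _ /= [-> -> ->].
Qed.

Lemma uniq_L1 m : uniq (L1 m).
Proof.
apply: allpairs_uniq; try exact: iota_uniq.
by move=> [x1 y1] [x2 y2] _ _ /= [_ -> ->].
Qed.

Lemma uniq_L2 m : uniq (L2 m).
Proof.
apply: allpairs_uniq; try exact: iota_uniq.
by move=> [x1 y1] [x2 y2] _ _ /= [-> _ ->].
Qed.

Definition D m := [seq ((m.-1 - c)%N, (m.-1 - c)%N, c) | c <- iota 0 m].

Lemma sumN m :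
  sumn [seq count_mem u (L1 m) * count_mem u (L2 m) | u <- blocks m] = m.
Proof.
rewrite (eq_map (g := fun u => nat_of_bool ((u \in L1 m) && (u \in L2 m)))); last first.
  by move=> u; rewrite !count_uniq_mem ?uniq_L1 ?uniq_L2 // mulnb.
rewrite sumn_count -size_filter.
have -> : size (filter (fun u => (u \in L1 m) && (u \in L2 m)) (blocks m)) = size (D m).
  apply: perm_size; apply: uniq_perm.
  - by rewrite filter_uniq // uniq_blocks.
  - by rewrite map_inj_in_uniq ?iota_uniq // => x y _ _ /eqP; rewrite !xpair_eqE => /andP[_ /eqP].
  move=> [[a b] c]; rewrite mem_filter mem_blocks mem_L1 mem_L2.
  apply/idP/mapP => [/andP[/andP[/and3P[_ hc /eqP ->] /and3P[_ _ /eqP ->]] _] | [k]].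
    by exists c; rewrite // mem_iota.
  rewrite mem_iota add0n => hk [-> -> ->].
  apply/andP; split; first (apply/andP; split); apply/and3P; split => //; lia.
by rewrite size_map size_iota.
Qed.

Theorem lemma1 (m : nat) (hm : odd m) :
  lpeq (symp m (coarse m (s1 m)) (coarse m (s2 m))) lone.
Proof.
have m0 : 0 < m by case: m hm.
have allL1 : all (fun t => [&& t.1.1 < m, t.1.2 < m & t.2 < m]) (L1 m).
  apply/allP => [[[a b] c]]; rewrite mem_L1 => /and3P[hb hc /eqP ->] /=.
  rewrite hb hc andbT; lia.
have allL2 : all (fun t => [&& t.1.1 < m, t.1.2 < m & t.2 < m]) (L2 m).
  apply/allP => [[[a b] c]]; rewrite mem_L2 => /and3P[ha hc /eqP ->] /=.
  rewrite ha hc /=; lia.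
have -> : symp m (coarse m (s1 m)) (coarse m (s2 m)) =
   flatten [seq nseq (count_mem u (L1 m) * count_mem u (L2 m)) z0 | u <- blocks m].
  rewrite /symp /coarse s1E s2E /=; congr flatten; apply: eq_map => u.
  by rewrite !cgE // lmul_nseq /ladd cats0.
move=> e; rewrite /lcoef count_flat_nseq sumN /lone /=.
by case: (z0 == e) => //=; rewrite ?mul1n ?addn0.
Qed.
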